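(* Let $G$ be a metabelian group and $g\in G$. Then every right Engel sink of $g^{-1}$ is a left Engel sink of $g$. In particular, if $g^{-1}$ has a finite (minimal) right Engel sink $\mathscr R(g^{-1})$, then $g$ has a finite left Engel sink and $\mathscr E(g)\subseteq\mathscr R(g^{-1})$.
   Context: Commutators: $a^b=b^{-1}ab$, $[a,b]=a^{-1}b^{-1}ab$, and $[a,{}_nb]=[\dots[[a,b],b],\dots,b]$ with $b$ repeated $n$ times. A right Engel sink of $g\in G$ is a set $\mathscr R\subseteq G$ such that for every $x\in G$ there is a positive integer $r(x)$ with $[g,{}_nx]\in\mathscr R$ for all $n\ge r(x)$; a left Engel sink of $g$ is a set $\mathscr E\subseteq G$ such that for every $x\in G$ there is a positive integer $l(x)$ with $[x,{}_ng]\in\mathscr E$ for all $n\ge l(x)$. When finite sinks exist, the intersection of all finite right (resp. left) Engel sinks of $g$ is again one; these minimal sinks are denoted $\mathscr R(g)$ and $\mathscr E(g)$. A group is metabelian if its derived subgroup is abelian. *)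

(* Defs.v *)
(* groups here may be infinite, so we use an explicit
   group record instead of MathComp's finGroupType. *)
From Stdlib Require Import List Arith.

Record group := Group {
  carrier :> Type;
  gmul : carrier -> carrier -> carrier;
  ginv : carrier -> carrier;
  gone : carrier;
  gmulA : forall x y z, gmul x (gmul y z) = gmul (gmul x y) z;
  gmul1 : forall x, gmul gone x = x;
  gmulV : forall x, gmul (ginv x) x = gone
}.

Arguments gmul {g} _ _.
Arguments ginv {g} _.
Arguments gone {g}.

Definition comm {G : group} (a b : G) : G :=
  gmul (gmul (gmul (ginv a) (ginv b)) a) b.

Fixpoint comm_iter {G : group} (a b : G) (n : nat) : G :=
  match n with
  | 0 => a
  | S k => comm (comm_iter a b k) b
  end.

Inductive derived (G : group) : G -> Prop :=
  | derived_comm : forall a b : G, derived G (comm a b)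
  | derived_one : derived G gone
  | derived_mul : forall x y, derived G x -> derived G y -> derived G (gmul x y)
  | derived_inv : forall x, derived G x -> derived G (ginv x).

Definition metabelian (G : group) : Prop :=
  forall x y : G, derived G x -> derived G y -> gmul x y = gmul y x.

Definition right_engel_sink {G : group} (g : G) (R : G -> Prop) : Prop :=
  forall x : G, exists r, 0 < r /\ forall n, r <= n -> R (comm_iter g x n).

Definition left_engel_sink {G : group} (g : G) (E : G -> Prop) : Prop :=
  forall x : G, exists l, 0 < l /\ forall n, l <= n -> E (comm_iter x g n).

Definition finite_set {G : group} (S : G -> Prop) : Prop :=
  exists l : list G, forall x, S x -> In x l.

(* minimal sinks = intersections of all finite sinks *)
Definition min_right_sink {G : group} (g : G) (x : G) : Prop :=
  forall R, finite_set R -> right_engel_sink g R -> R x.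

Definition min_left_sink {G : group} (g : G) (x : G) : Prop :=
  forall E, finite_set E -> left_engel_sink g E -> E x.

(* Main.v *)
Require Import Defs.
From Stdlib Require Import List Arith Lia.

Section GL.
Variable G : group.
Implicit Types x y z : G.

Lemma mulVr x : gmul x (ginv x) = gone.
Proof.
  rewrite <- (gmul1 G (gmul x (ginv x))).
  rewrite <- (gmulV G (ginv x)) at 1.
  rewrite <- gmulA. rewrite (gmulA G (ginv x) x (ginv x)). rewrite gmulV, gmul1.
  apply gmulV.
Qed.

Lemma mulr1 x : gmul x gone = x.
Proof. rewrite <- (gmulV G x), gmulA, mulVr. apply gmul1. Qed.

Lemma invK_l x y : gmul (ginv x) (gmul x y) = y.
Proof. rewrite gmulA, gmulV. apply gmul1. Qed.

Lemma invK_r x y : gmul x (gmul (ginv x) y) = y.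
Proof. rewrite gmulA, mulVr. apply gmul1. Qed.

Lemma inv_uniq x y : gmul x y = gone -> ginv x = y.
Proof.
  intro H. rewrite <- (mulr1 (ginv x)), <- H. apply invK_l.
Qed.

Lemma invM x y : ginv (gmul x y) = gmul (ginv y) (ginv x).
Proof.
  apply inv_uniq. rewrite <- gmulA, (gmulA G y (ginv y)), mulVr, gmul1. apply mulVr.
Qed.

Lemma invinv x : ginv (ginv x) = x.
Proof. apply inv_uniq. apply gmulV. Qed.
End GL.

Lemma key (G : group) (HG : metabelian G) (g x : G) (n : nat) :
  comm_iter (ginv g) (gmul (comm x g) g) (S n) = comm_iter x g (S (S n)).
Proof.
  induction n as [|n IH].
  - simpl. set (c := comm x g). unfold comm at 1 2.
    rewrite invinv, invM, <- !gmulA, invK_r. reflexivity.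
  - change (comm (comm_iter (ginv g) (gmul (comm x g) g) (S n)) (gmul (comm x g) g)
      = comm (comm_iter x g (S (S n))) g).
    rewrite IH.
    set (c := comm x g). set (b := comm_iter x g (S (S n))).
    assert (Hbc : gmul b c = gmul c b).
    { apply HG. unfold b. simpl. apply derived_comm. unfold c. apply derived_comm. }
    unfold comm. rewrite invM, <- !gmulA.
    rewrite (gmulA G b c g), Hbc, <- gmulA, invK_l. reflexivity.
Qed.

Theorem lemma2p5 (G : group) (HG : metabelian G) (g : G) :
  (forall R : G -> Prop, right_engel_sink (ginv g) R -> left_engel_sink g R) /\
  ((exists R : G -> Prop, finite_set R /\ right_engel_sink (ginv g) R) ->
     (exists E : G -> Prop, finite_set E /\ left_engel_sink g E) /\
     (forall x : G, min_left_sink g x -> min_right_sink (ginv g) x)).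
Proof.
  assert (P1 : forall R : G -> Prop, right_engel_sink (ginv g) R -> left_engel_sink g R).
  { intros R HR x. destruct (HR (gmul (comm x g) g)) as [r [Hr H]].
    exists (S r). split; [lia|]. intros m Hm.
    destruct m as [|m]; [lia|]. destruct m as [|m]; [lia|].
    rewrite <- key by exact HG. apply H. lia. }
  split; [exact P1|].
  intros [R [HF HR]]. split.
  - exists R. split; [exact HF | apply P1; exact HR].
  - intros x Hx R' HF' HR'. apply Hx; [exact HF' | apply P1; exact HR'].
Qed.
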